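(* Let $\kappa$ be a weakly compact cardinal and let $A\subseteq\kappa$ be a non-stationary set of regular cardinals which is unbounded in $\kappa$. Then $\kappa\notin\operatorname{spec}(A)$. Therefore, if $\kappa$ is weakly compact and $A\subseteq\kappa$ is an unbounded set of regular cardinals, then $\kappa\in\operatorname{spec}(A)$ if and only if $A$ is stationary in $\kappa$.
   Context: For a set $A$ of regular cardinals, $\prod A$ is the set of functions $f$ with domain $A$ and $f(a)\in a$, ordered by pointwise domination. $\operatorname{spec}(A)$ is the set of regular cardinals $\lambda$ with $(\prod A,<)\geq_T\lambda$ in the Tukey order; equivalently, regular $\lambda$ such that there exists $\mathcal{F}\subseteq\prod A$ of size $\lambda$ such that every $\lambda$-sized subset of $\mathcal{F}$ is unbounded in $(\prod A,<)$. *)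

(* Defs.v *)
(* A cardinal kappa is represented by a type K with a strict well-order lt
   whose order type is an initial ordinal; ordinals below kappa are elements
   of K, and an element a : K is identified with the ordinal
   {b | lt b a}. *)

Set Implicit Arguments.

Record wellorder (K : Type) (lt : K -> K -> Prop) : Prop := {
  wo_irrefl : forall x, ~ lt x x;
  wo_trans : forall x y z, lt x y -> lt y z -> lt x z;
  wo_total : forall x y, lt x y \/ x = y \/ lt y x;
  wo_wf : well_founded lt }.

Definition equipotent {T U : Type} (A : T -> Prop) (B : U -> Prop) : Prop :=
  exists f : {x | A x} -> {y | B y},
    (forall x y, f x = f y -> x = y) /\ (forall y, exists x, f x = y).

Definition fullset (T : Type) : T -> Prop := fun _ => True.

Section Ord.
Variables (K : Type) (lt : K -> K -> Prop).

Definition seg (a : K) : K -> Prop := fun b => lt b a.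

Definition is_cardinal : Prop := forall a : K, ~ equipotent (seg a) (@fullset K).

Definition is_cardinal_elt (a : K) : Prop :=
  forall b, lt b a -> ~ equipotent (seg b) (seg a).

Definition infinite_set {T : Type} (S : T -> Prop) : Prop :=
  ~ exists n : nat, equipotent S (fun i : nat => i < n).

Definition regular_elt (a : K) : Prop :=
  is_cardinal_elt a /\ infinite_set (seg a) /\
  forall S : K -> Prop, (forall x, S x -> lt x a) ->
    (forall b, lt b a -> exists x, S x /\ (lt b x \/ b = x)) ->
    equipotent S (seg a).

(* kappa is weakly compact: uncountable cardinal with kappa -> (kappa)^2_2 *)
Definition weakly_compact : Prop :=
  is_cardinal /\
  (~ exists f : K -> nat, forall x y, f x = f y -> x = y) /\
  forall c : K -> K -> bool,
    exists H : K -> Prop, equipotent H (@fullset K) /\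
      exists i : bool, forall x y, H x -> H y -> lt x y -> c x y = i.

Definition unbounded_in_kappa (S : K -> Prop) : Prop :=
  forall b, exists x, S x /\ lt b x.

Definition closed_in_kappa (C : K -> Prop) : Prop :=
  forall a, (exists x, C x /\ lt x a) ->
    (forall b, lt b a -> exists x, C x /\ lt b x /\ lt x a) -> C a.

Definition club (C : K -> Prop) : Prop :=
  closed_in_kappa C /\ unbounded_in_kappa C.

Definition stationary (A : K -> Prop) : Prop :=
  forall C, club C -> exists x, A x /\ C x.

Definition prodA (A : K -> Prop) : Type :=
  forall a : {a | A a}, {b | lt b (proj1_sig a)}.

Definition dominated (A : K -> Prop) (f g : prodA A) : Prop :=
  forall a, lt (proj1_sig (f a)) (proj1_sig (g a)).

Definition bounded_in_prod (A : K -> Prop) (G : prodA A -> Prop) : Prop :=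
  exists g : prodA A, forall f, G f -> dominated f g.

(* kappa in spec(A) (using the equivalent characterization given in the
   paper): there is F of size kappa all of whose kappa-sized subsets are
   unbounded in (prod A, <). *)
Definition kappa_in_spec (A : K -> Prop) : Prop :=
  exists F : prodA A -> Prop, equipotent F (@fullset K) /\
    forall G : prodA A -> Prop, (forall f, G f -> F f) ->
      equipotent G (@fullset K) -> ~ bounded_in_prod G.

End Ord.

(* Main.v *)
Require Import Defs.
From Stdlib Require Import Classical ClassicalEpsilon FunctionalExtensionality ProofIrrelevance Arith Lia.

Definition inj (X Y : Type) : Prop := exists f : X -> Y, forall x y, f x = f y -> x = y.

Lemma inj_comp X Y Z : inj X Y -> inj Y Z -> inj X Z.
Proof. intros [f Hf] [g Hg]. exists (fun x => g (f x)). auto. Qed.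

Lemma inj_refl X : inj X X.
Proof. exists (fun x => x); auto. Qed.

Lemma cid' {T} (P : T -> Prop) : (exists x, P x) -> {x | P x}.
Proof. apply constructive_indefinite_description. Qed.

Lemma SB X Y (f : X -> Y) (g : Y -> X) :
  (forall x y, f x = f y -> x = y) -> (forall x y, g x = g y -> x = y) ->
  exists h : X -> Y, (forall x y, h x = h y -> x = y) /\ (forall y, exists x, h x = y).
Proof.
  intros Hf Hg.
  set (C := fix C n : X -> Prop := match n with
        | O => fun x => ~ exists y, g y = x
        | S n => fun x => exists x', C n x' /\ g (f x') = x end).
  set (CC := fun x => exists n, C n x).
  assert (Hinv : forall x, ~ CC x -> {y | g y = x}).
  { intros x Hx. apply cid'. apply NNPP. intro Hn. apply Hx. exists O. exact Hn. }
  exists (fun x => match excluded_middle_informative (CC x) with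
           | left _ => f x | right H => proj1_sig (Hinv x H) end).
  split.
  - intros x y.
    destruct (excluded_middle_informative (CC x)) as [Cx|Cx];
    destruct (excluded_middle_informative (CC y)) as [Cy|Cy]; intro E.
    + auto.
    + destruct (Hinv y Cy) as [y' Hy']; simpl in E. subst y'.
      exfalso. apply Cy. destruct Cx as [n Hn]. exists (S n). exists x. split; [exact Hn | congruence].
    + destruct (Hinv x Cx) as [x' Hx']; simpl in E. subst x'.
      exfalso. apply Cx. destruct Cy as [n Hn]. exists (S n). exists y. split; [exact Hn | congruence].
    + destruct (Hinv x Cx) as [x' Hx']; destruct (Hinv y Cy) as [y' Hy']; simpl in E. congruence.
  - intros y. destruct (classic (CC (g y))) as [Cg|Cg].
    + destruct Cg as [[|n] Hn].
      * exfalso. apply Hn. eauto.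
      * destruct Hn as [x' [Hx' E]]. apply Hg in E. subst y. exists x'.
        destruct (excluded_middle_informative (CC x')) as [_|N]; auto.
        exfalso. apply N. exists n. auto.
    + exists (g y). destruct (excluded_middle_informative (CC (g y))) as [Cx|Cx].
      * contradiction.
      * destruct (Hinv (g y) Cx) as [y' Hy']; simpl. auto.
Qed.

Lemma SB_eq {T U} (S : T -> Prop) (R : U -> Prop) :
  inj {x | S x} {y | R y} -> inj {y | R y} {x | S x} -> equipotent S R.
Proof. intros [f Hf] [g Hg]. destruct (SB _ _ f g Hf Hg) as [h Hh]. exists h. exact Hh. Qed.

Lemma eq_inj1 {T U} (S : T -> Prop) (R : U -> Prop) :
  equipotent S R -> inj {x | S x} {y | R y}.
Proof. intros [f [Hf _]]. exists f; auto. Qed.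

Lemma eq_inj2 {T U} (S : T -> Prop) (R : U -> Prop) :
  equipotent S R -> inj {y | R y} {x | S x}.
Proof.
  intros [f [Hf Hs]].
  exists (fun y => proj1_sig (cid' _ (Hs y))).
  intros y1 y2 E.
  destruct (cid' _ (Hs y1)) as [x1 H1]; destruct (cid' _ (Hs y2)) as [x2 H2]; simpl in E.
  congruence.
Qed.

Lemma inj_full_l {T} : inj T {x : T | fullset x}.
Proof. exists (fun x => exist _ x I). intros x y E. injection E; auto. Qed.
Lemma inj_full_r {T} : inj {x : T | fullset x} T.
Proof. exists (@proj1_sig _ _). intros [x hx] [y hy] E. simpl in E. subst. destruct hx, hy. auto. Qed.

Lemma sig_ext {T} (P : T -> Prop) (x y : {a | P a}) : proj1_sig x = proj1_sig y -> x = y.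
Proof. destruct x as [x hx], y as [y hy]; simpl; intro E; subst. f_equal. apply proof_irrelevance. Qed.

Lemma inj_sub {T} (P Q : T -> Prop) : (forall x, P x -> Q x) -> inj {x | P x} {x | Q x}.
Proof.
  intros H. exists (fun x => exist _ (proj1_sig x) (H _ (proj2_sig x))).
  intros x y E. apply sig_ext. apply (f_equal (@proj1_sig _ _)) in E. exact E.
Qed.

Lemma inj_pre {X Y} (Q : X -> Prop) (P : Y -> Prop) (f : X -> Y) :
  (forall y, P y -> exists x, Q x /\ f x = y) -> inj {y | P y} {x | Q x}.
Proof.
  intros H.
  assert (G : forall y : {y | P y}, {x | Q x /\ f x = proj1_sig y}).
  { intros y. apply cid'. apply H. exact (proj2_sig y). }
  exists (fun y => exist Q (proj1_sig (G y)) (proj1 (proj2_sig (G y)))).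
  intros y1 y2 E. apply (f_equal (@proj1_sig _ _)) in E. simpl in E.
  apply sig_ext. rewrite <- (proj2 (proj2_sig (G y1))), <- (proj2 (proj2_sig (G y2))), E.
  reflexivity.
Qed.

Lemma inj_pre_T {X Y} (P : Y -> Prop) (f : X -> Y) :
  (forall y, P y -> exists x, f x = y) -> inj {y | P y} X.
Proof.
  intros H. eapply inj_comp; [apply (inj_pre (@fullset X) P f)|apply inj_full_r].
  intros y Py. destruct (H y Py) as [x Hx]. exists x. split; [exact I|exact Hx].
Qed.

Definition le' {K} (lt : K -> K -> Prop) x y := lt x y \/ x = y.
Definition NoMax {K} (lt : K -> K -> Prop) := forall x, exists y, lt x y.

Lemma wf_min {K} (lt : K -> K -> Prop) (P : K -> Prop) : well_founded lt ->
  (exists x, P x) -> exists m, P m /\ forall y, P y -> ~ lt y m.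
Proof.
  intros Hwf [x Hx]. revert Hx. induction x as [x IH] using (well_founded_induction Hwf).
  intros Hx. destruct (classic (exists y, P y /\ lt y x)) as [[y [Py Hy]]|N].
  - exact (IH y Hy Py).
  - exists x. split; auto. intros y Py Hy. apply N; eauto.
Qed.

Lemma up2 {K} (lt : K -> K -> Prop) : wellorder lt -> NoMax lt ->
  forall x y, exists z, lt x z /\ lt y z.
Proof.
  intros W NM x y. destruct (wo_total W x y) as [H|[H|H]].
  - destruct (NM y) as [z Hz]. exists z. split; auto. eapply (wo_trans W); eauto.
  - subst. destruct (NM y) as [z Hz]. eauto.
  - destruct (NM x) as [z Hz]. exists z. split; auto. eapply (wo_trans W); eauto.
Qed.

Lemma inhab {K} (lt : K -> K -> Prop) : weakly_compact lt -> inhabited K.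
Proof.
  intros [_ [U _]]. apply NNPP. intro N. apply U. exists (fun x => False_rect nat (N (inhabits x))).
  intros x. exfalso. apply N. exact (inhabits x).
Qed.

Lemma L1 {K} (lt : K -> K -> Prop) : is_cardinal lt -> forall a, ~ inj K {y | seg lt a y}.
Proof.
  intros C a Hi. apply (C a). apply SB_eq.
  - exists (fun x => exist (@fullset K) (proj1_sig x) I). intros x y E.
    apply sig_ext. apply (f_equal (@proj1_sig _ _)) in E. exact E.
  - eapply inj_comp; [apply inj_full_r | exact Hi].
Qed.

Definition dec (P : Prop) : bool := if excluded_middle_informative P then true else false.
Lemma decT P : P -> dec P = true.
Proof. unfold dec; destruct (excluded_middle_informative P); tauto. Qed.
Lemma decF P : ~ P -> dec P = false.
Proof. unfold dec; destruct (excluded_middle_informative P); tauto. Qed.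
Lemma dec_spec P b : dec P = b -> (b = true -> P) /\ (b = false -> ~ P).
Proof. unfold dec; destruct (excluded_middle_informative P); intros <-; split; congruence. Qed.

Lemma L2gen {K} (lt : K -> K -> Prop) : wellorder lt -> weakly_compact lt -> NoMax lt ->
  forall T : Type, ~ inj K T -> forall S : K -> Prop, inj {x | S x} T ->
  exists b, forall x, S x -> lt x b.
Proof.
  intros W WC NM T NT S [fT HfT]. apply NNPP. intro NB.
  assert (Hb : forall x, exists s, S s /\ lt x s).
  { intro x. apply NNPP. intro N. apply NB. destruct (NM x) as [z Hz]. exists z. intros s Ss.
    destruct (wo_total W s x) as [H|[H|H]].
    - eapply (wo_trans W); eauto.
    - subst; auto.
    - exfalso; eauto. }
  set (blk := fun x => proj1_sig (cid' _ (Hb x))).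
  assert (Hblk : forall x, S (blk x) /\ lt x (blk x)).
  { intro x. unfold blk. destruct (cid' _ (Hb x)); simpl; auto. }
  destruct WC as [WC1 [WC2 WC3]].
  destruct (WC3 (fun x y => dec (blk x = blk y))) as [H [Heq [i Hhom]]].
  assert (KH : inj K {x | H x}) by (eapply inj_comp; [apply inj_full_l | exact (eq_inj2 _ _ Heq)]).
  destruct i.
  - destruct (inhab lt (conj WC1 (conj WC2 WC3))) as [k0].
    destruct KH as [fH HfH]. destruct (fH k0) as [x0 Hx0].
    assert (Hs : forall y, H y -> seg lt (blk x0) y).
    { intros y Hy. unfold seg. destruct (wo_total W y x0) as [E|[E|E]].
      - pose proof (proj1 (dec_spec _ _ (Hhom _ _ Hy Hx0 E)) eq_refl) as E2.
        rewrite <- E2. apply Hblk.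
      - subst. apply Hblk.
      - pose proof (proj1 (dec_spec _ _ (Hhom _ _ Hx0 Hy E)) eq_refl) as E2.
        rewrite E2. apply Hblk. }
    apply (L1 lt WC1 (blk x0)). eapply inj_comp; [exists fH; exact HfH| ]. apply inj_sub. exact Hs.
  - apply NT. eapply inj_comp; [exact KH|].
    exists (fun x => fT (exist _ (blk (proj1_sig x)) (proj1 (Hblk (proj1_sig x))))).
    intros [x Hx] [y Hy] E. apply HfT in E. apply (f_equal (@proj1_sig _ _)) in E. simpl in E.
    apply sig_ext; simpl.
    destruct (wo_total W x y) as [E'|[E'|E']]; auto; exfalso.
    + exact (proj2 (dec_spec _ _ (Hhom _ _ Hx Hy E')) eq_refl E).
    + exact (proj2 (dec_spec _ _ (Hhom _ _ Hy Hx E')) eq_refl (eq_sym E)).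
Qed.

Lemma IMB {K} (lt : K -> K -> Prop) : wellorder lt -> weakly_compact lt -> NoMax lt ->
  forall (f : K -> K) b, exists c, forall x, lt x b -> lt (f x) c.
Proof.
  intros W WC NM f b.
  destruct (L2gen lt W WC NM {y | seg lt b y} (L1 lt (proj1 WC) b) (fun y => exists x, lt x b /\ f x = y)) as [c Hc].
  - apply (inj_pre _ _ f). intros y [x [Hx E]]. eauto.
  - exists c. intros x Hx. apply Hc. eauto.
Qed.

Lemma CNT {K} (lt : K -> K -> Prop) : wellorder lt -> weakly_compact lt -> NoMax lt ->
  forall (s : nat -> K), exists c, forall n, lt (s n) c.
Proof.
  intros W WC NM s.
  assert (NT : ~ inj K nat) by (intros [f Hf]; apply (proj1 (proj2 WC)); exists f; exact Hf).
  destruct (L2gen lt W WC NM nat NT (fun y => exists n, s n = y)) as [c Hc].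
  - apply (inj_pre_T _ s). auto.
  - exists c. intros n. apply Hc. eauto.
Qed.

Lemma bounded_small {K} (lt : K -> K -> Prop) : wellorder lt -> weakly_compact lt ->
  forall S b, (forall x, S x -> lt x b) -> ~ inj K {x | S x}.
Proof.
  intros W WC S b Hb Hi. apply (L1 lt (proj1 WC) b). eapply inj_comp; [exact Hi|]. apply inj_sub. exact Hb.
Qed.

Lemma unb_eq {K} (lt : K -> K -> Prop) : wellorder lt -> weakly_compact lt -> NoMax lt ->
  forall S, (forall b, exists x, S x /\ lt b x) -> equipotent S (@fullset K).
Proof.
  intros W WC NM S U. apply SB_eq.
  - exists (fun x => exist (@fullset K) (proj1_sig x) I). intros x y E.
    apply sig_ext. apply (f_equal (@proj1_sig _ _)) in E. exact E.
  - eapply inj_comp; [apply inj_full_r|].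
    apply NNPP. intro N. destruct (L2gen lt W WC NM {x | S x} N S (inj_refl _)) as [b Hb].
    destruct (U b) as [x [Sx Hx]]. apply (wo_irrefl W b). eapply (wo_trans W); eauto.
Qed.

Lemma eq_unb {K} (lt : K -> K -> Prop) : wellorder lt -> weakly_compact lt -> NoMax lt ->
  forall S, equipotent S (@fullset K) -> forall b, exists x, S x /\ lt b x.
Proof.
  intros W WC NM S E b. apply NNPP. intro N. destruct (NM b) as [z Hz].
  apply (bounded_small lt W WC S z).
  - intros x Sx. destruct (wo_total W x b) as [H|[H|H]].
    + eapply (wo_trans W); eauto.
    + subst; auto.
    + exfalso; eauto.
  - eapply inj_comp; [apply inj_full_l|]. exact (eq_inj2 _ _ E).
Qed.

Lemma lub {K} (lt : K -> K -> Prop) : wellorder lt -> weakly_compact lt -> NoMax lt ->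
  forall s : nat -> K, (forall n, lt (s n) (s (S n))) ->
  exists d, (forall n, lt (s n) d) /\ (forall x, lt x d -> exists n, lt x (s n)).
Proof.
  intros W WC NM s Hs.
  destruct (wf_min lt (fun y => forall n, lt (s n) y) (wo_wf W) (CNT lt W WC NM s)) as [d [Hd Hmin]].
  exists d. split; auto. intros x Hx. apply NNPP. intro N. apply (Hmin x); auto.
  intro n. destruct (wo_total W (s n) x) as [H|[H|H]]; auto.
  - exfalso. apply N. exists (S n). rewrite <- H. auto.
  - exfalso. apply N. exists (S n). eapply (wo_trans W); eauto.
Qed.

Lemma seq_lim {K} (lt : K -> K -> Prop) : wellorder lt -> weakly_compact lt -> NoMax lt ->
  forall (step : K -> K), (forall x, lt x (step x)) -> forall b,
  exists d, lt b d /\ forall x, lt x d -> exists y, lt x y /\ lt (step y) d.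
Proof.
  intros W WC NM step Hst b.
  set (s := fun n => Nat.iter n step b).
  destruct (lub lt W WC NM s (fun n => Hst (s n))) as [d [H1 H2]].
  exists d. split; [exact (H1 O)|]. intros x Hx. destruct (H2 x Hx) as [n Hn].
  exists (s n). split; auto. exact (H1 (S n)).
Qed.

Lemma reg_nonempty {K} (lt : K -> K -> Prop) a : regular_elt lt a -> exists x, lt x a.
Proof.
  intros [_ [Inf _]]. apply NNPP. intro N. apply Inf. exists 0.
  exists (fun x : {x | seg lt a x} => False_rect {i | i < 0} (N (ex_intro _ (proj1_sig x) (proj2_sig x)))).
  split.
  - intros x. exfalso. exact (N (ex_intro _ (proj1_sig x) (proj2_sig x))).
  - intros [y hy]. exfalso. lia.
Qed.

Lemma reg_limit {K} (lt : K -> K -> Prop) a g : wellorder lt -> regular_elt lt a -> lt g a ->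
  exists g', lt g g' /\ lt g' a.
Proof.
  intros W Ra Hg. apply NNPP. intro N.
  destruct Ra as [_ [Inf Cof]]. apply Inf. exists 1.
  destruct (Cof (fun x => x = g)) as [f [Hf Hs]].
  - intros x ->. exact Hg.
  - intros b Hb. exists g. split; auto. destruct (wo_total W b g) as [H|[H|H]]; auto.
    exfalso; eauto.
  - exists (fun _ => exist (fun i => i < 1) 0 (le_n 1)). split.
    + intros x y _. destruct (Hs x) as [s1 E1]. destruct (Hs y) as [s2 E2].
      assert (s1 = s2) by (apply sig_ext; rewrite (proj2_sig s1), (proj2_sig s2); reflexivity).
      congruence.
    + intros [y hy]. exists (exist (seg lt a) g Hg). apply sig_ext. simpl. lia.
Qed.

Definition mkf {K} (lt : K -> K -> Prop) (A : K -> Prop) (z0 : prodA lt A) (al : K) : prodA lt A :=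
  fun a' => match excluded_middle_informative (lt al (proj1_sig a')) with
            | left h => exist (fun b => lt b (proj1_sig a')) al h
            | right _ => z0 a' end.

Lemma mkf_val {K} (lt : K -> K -> Prop) A z0 al a' : lt al (proj1_sig a') ->
  proj1_sig (mkf lt A z0 al a') = al.
Proof. intros H. unfold mkf. destruct (excluded_middle_informative _); [reflexivity|contradiction]. Qed.

Lemma spec_of_stat {K} (lt : K -> K -> Prop) : wellorder lt -> weakly_compact lt ->
  forall A : K -> Prop, (forall a, A a -> regular_elt lt a) -> unbounded_in_kappa lt A ->
  stationary lt A -> kappa_in_spec lt A.
Proof.
  intros W WC A HA UA ST.
  assert (NM : NoMax lt) by (intro x; destruct (UA x) as [y [_ Hy]]; eauto).
  assert (z0 : prodA lt A).
  { intros a'. apply cid'. apply reg_nonempty. apply HA. exact (proj2_sig a'). }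
  set (mk := mkf lt A z0).
  assert (mk_inj : forall x y, mk x = mk y -> x = y).
  { intros x y E. destruct (up2 lt W NM x y) as [z [Hx Hy]]. destruct (UA z) as [a [Aa Ha]].
    assert (Hxa : lt x a) by (eapply (wo_trans W); eauto).
    assert (Hya : lt y a) by (eapply (wo_trans W); eauto).
    pose proof (f_equal (fun f => proj1_sig (f (exist A a Aa))) E) as E'. cbv beta in E'.
    unfold mk in E'. rewrite !mkf_val in E' by assumption. exact E'. }
  exists (fun f => exists al, f = mk al). split.
  - apply SB_eq.
    + eapply inj_comp; [|apply inj_full_l]. apply (inj_pre_T _ mk). intros y [al ->]. eauto.
    + eapply inj_comp; [apply inj_full_r|].
      exists (fun al => exist (fun f => exists al, f = mk al) (mk al) (ex_intro _ al eq_refl)).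
      intros x y E. apply (f_equal (@proj1_sig _ _)) in E. simpl in E. auto.
  - intros G HGF HG [g Hg].
    set (X := fun al => G (mk al)).
    assert (XU : forall b, exists al, X al /\ lt b al).
    { intros b. apply NNPP. intro N. destruct (NM b) as [z Hz].
      apply (L1 lt (proj1 WC) z).
      eapply inj_comp; [apply inj_full_l|]. eapply inj_comp; [exact (eq_inj2 _ _ HG)|].
      apply (inj_pre _ _ mk). intros y Gy. destruct (HGF y Gy) as [al ->]. exists al. split; auto.
      unfold seg. destruct (wo_total W al b) as [H|[H|H]].
      - eapply (wo_trans W); eauto.
      - subst; auto.
      - exfalso. apply N. exists al. split; auto. }
    assert (nX : forall x, {y | X y /\ lt x y}) by (intro x; apply cid'; auto).
    set (D := fun d => (exists xi, X xi /\ lt xi d) /\ forall x, lt x d -> exists xi, X xi /\ lt x xi /\ lt xi d).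
    destruct (ST D) as [a [Aa Da]].
    + split.
      * intros d [x [Dx Hx]] Hlim. split.
        -- destruct Dx as [[xi [Xxi Hxi]] _]. exists xi. split; auto. eapply (wo_trans W); eauto.
        -- intros y Hy. destruct (Hlim y Hy) as [x' [Dx' [Hyx' Hx'd]]].
           destruct Dx' as [_ Dx']. destruct (Dx' y Hyx') as [xi [Xxi [H1 H2]]].
           exists xi. repeat split; auto. eapply (wo_trans W); eauto.
      * intros b. destruct (seq_lim lt W WC NM (fun x => proj1_sig (nX x)) (fun x => proj2 (proj2_sig (nX x))) b)
          as [d [Hbd Hd]].
        exists d. split; auto. split.
        -- destruct (Hd b Hbd) as [y [_ Hy]]. exists (proj1_sig (nX y)). split; auto. exact (proj1 (proj2_sig (nX y))).
        -- intros x Hx. destruct (Hd x Hx) as [y [Hxy Hy]]. exists (proj1_sig (nX y)).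
           split; [exact (proj1 (proj2_sig (nX y)))|]. split; auto.
           eapply (wo_trans W); [exact Hxy| exact (proj2 (proj2_sig (nX y)))].
    + set (a' := exist A a Aa). pose proof (proj2_sig (g a')) as Hga. simpl in Hga.
      destruct Da as [_ Da]. destruct (Da _ Hga) as [xi [Xxi [H1 H2]]].
      pose proof (Hg (mk xi) Xxi a') as Hd. unfold mk in Hd. rewrite mkf_val in Hd by exact H2.
      apply (wo_irrefl W xi). eapply (wo_trans W); eauto.
Qed.

Definition agree {K} (lt : K -> K -> Prop) (A : K -> Prop) (V : K -> K -> K) x y a :=
  forall a', A a' -> lt a' a -> V x a' = V y a'.
Definition lexlt {K} (lt : K -> K -> Prop) (A : K -> Prop) (V : K -> K -> K) x y :=
  exists a, A a /\ agree lt A V x y a /\ lt (V x a) (V y a).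

Lemma lex_total {K} (lt : K -> K -> Prop) A V : wellorder lt ->
  (forall x y, x <> y -> exists a, A a /\ V x a <> V y a) ->
  forall x y, x <> y -> lexlt lt A V x y \/ lexlt lt A V y x.
Proof.
  intros W Hd x y Hxy.
  destruct (wf_min lt _ (wo_wf W) (Hd x y Hxy)) as [a [[Aa Ha] Hmin]].
  assert (Ag : agree lt A V x y a).
  { intros a' Aa' Ha'. apply NNPP. intro N. exact (Hmin a' (conj Aa' N) Ha'). }
  destruct (wo_total W (V x a) (V y a)) as [H|[H|H]].
  - left. exists a. auto.
  - contradiction.
  - right. exists a. repeat split; auto. intros a' Aa' Ha'. symmetry. auto.
Qed.

Lemma lex_le {K} (lt : K -> K -> Prop) A V : wellorder lt ->
  forall x y a, lexlt lt A V x y -> A a -> agree lt A V x y a -> le' lt (V x a) (V y a).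
Proof.
  intros W x y a [a0 [Aa0 [Ag0 H0]]] Aa Ag. unfold le'.
  destruct (wo_total W a0 a) as [H|[H|H]].
  - exfalso. rewrite (Ag a0 Aa0 H) in H0. exact (wo_irrefl W _ H0).
  - subst. auto.
  - right. auto.
Qed.

Lemma le_trans_lt {K} (lt : K -> K -> Prop) : wellorder lt -> forall x y z, le' lt x y -> lt y z -> lt x z.
Proof. intros W x y z [H|H] H2; [eapply (wo_trans W); eauto | subst; auto]. Qed.
Lemma lt_le_trans {K} (lt : K -> K -> Prop) : wellorder lt -> forall x y z, lt x y -> le' lt y z -> lt x z.
Proof. intros W x y z H [H2|H2]; [eapply (wo_trans W); eauto | subst; auto]. Qed.
Lemma not_lt_le {K} (lt : K -> K -> Prop) : wellorder lt -> forall x y, ~ lt x y -> le' lt y x.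
Proof. intros W x y N. destruct (wo_total W x y) as [H|[H|H]]; unfold le'; [contradiction|auto|auto]. Qed.

Lemma STAB_down {K} (lt : K -> K -> Prop) : wellorder lt ->
  forall (Hp : K -> Prop) (h : K -> K), (exists x, Hp x) ->
  (forall x y, Hp x -> Hp y -> lt x y -> le' lt (h y) (h x)) ->
  exists b, forall x y, Hp x -> Hp y -> le' lt b x -> le' lt b y -> h x = h y.
Proof.
  intros W Hp h [x0 Hx0] Mono.
  destruct (wf_min lt (fun v => exists x, Hp x /\ h x = v) (wo_wf W) (ex_intro _ (h x0) (ex_intro _ x0 (conj Hx0 eq_refl))))
    as [v [[x1 [Hx1 E1]] Hmin]].
  exists x1.
  assert (forall x, Hp x -> le' lt x1 x -> h x = v).
  { intros x Hx [Hl|Hl].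
    - destruct (Mono _ _ Hx1 Hx Hl) as [H|H].
      + exfalso. apply (Hmin (h x)); eauto. congruence.
      + congruence.
    - subst; auto. }
  intros x y Hx Hy Hbx Hby. rewrite (H x), (H y); auto.
Qed.

Lemma STAB_up {K} (lt : K -> K -> Prop) : wellorder lt -> weakly_compact lt -> NoMax lt ->
  forall (Hp : K -> Prop) (h : K -> K) a, (forall b, exists x, Hp x /\ lt b x) ->
  (forall x, Hp x -> lt (h x) a) ->
  (forall x y, Hp x -> Hp y -> lt x y -> le' lt (h x) (h y)) ->
  exists b, forall x y, Hp x -> Hp y -> le' lt b x -> le' lt b y -> h x = h y.
Proof.
  intros W WC NM Hp h a HU Hb Mono. apply NNPP. intro N.
  assert (Step : forall x, Hp x -> exists y, Hp y /\ lt x y /\ lt (h x) (h y)).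
  { intros x Hx. apply NNPP. intro N2. apply N. exists x. 
    assert (forall y, Hp y -> le' lt x y -> h y = h x).
    { intros y Hy [Hl|Hl]; [|subst; auto].
      destruct (Mono _ _ Hx Hy Hl) as [H|H]; [|auto].
      exfalso. apply N2. eauto. }
    intros y z Hy Hz Hby Hbz. rewrite (H y), (H z); auto. }
  set (M := fun x => Hp x /\ forall y, Hp y -> lt y x -> lt (h y) (h x)).
  destruct (L2gen lt W WC NM {y | seg lt a y} (L1 lt (proj1 WC) a) M) as [b Hbd].
  - exists (fun x => exist (seg lt a) (h (proj1_sig x)) (Hb _ (proj1 (proj2_sig x)))).
    intros [x [Hx Mx]] [y [Hy My]] E. apply (f_equal (@proj1_sig _ _)) in E. simpl in E.
    apply sig_ext. simpl. destruct (wo_total W x y) as [H|[H|H]]; auto; exfalso.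
    + specialize (My x Hx H). rewrite E in My. exact (wo_irrefl W _ My).
    + specialize (Mx y Hy H). rewrite E in Mx. exact (wo_irrefl W _ Mx).
  - destruct (HU b) as [x [Hx Hbx]].
    destruct (Step x Hx) as [y [Hy [Hxy Hhxy]]].
    destruct (wf_min lt (fun z => Hp z /\ h z = h y) (wo_wf W) (ex_intro _ y (conj Hy eq_refl))) as [m [[Hm Em] Hmin]].
    assert (Mm : M m).
    { split; auto. intros z Hz Hzm. destruct (Mono _ _ Hz Hm Hzm) as [H|H]; auto.
      exfalso. apply (Hmin z); auto. split; congruence. }
    assert (Hxm : lt x m).
    { apply NNPP. intro N3. apply not_lt_le in N3; auto. destruct N3 as [H|H].
      - pose proof (Mono _ _ Hm Hx H) as H2. rewrite Em in H2.
        apply (wo_irrefl W (h x)). eapply lt_le_trans; eauto.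
      - subst. rewrite Em in Hhxy. exact (wo_irrefl W _ Hhxy). }
    specialize (Hbd m Mm). apply (wo_irrefl W b). eapply (wo_trans W); [exact Hbx|]. eapply (wo_trans W); eauto.
Qed.

Lemma core {K} (lt : K -> K -> Prop) : wellorder lt -> weakly_compact lt -> NoMax lt ->
  forall (A : K -> Prop) (V : K -> K -> K), (forall a, A a -> regular_elt lt a) ->
  forall C, club lt C -> (forall x, A x -> ~ C x) ->
  (forall x a, A a -> lt (V x a) a) ->
  (forall x y, x <> y -> exists a, A a /\ V x a <> V y a) ->
  exists (E : K -> Prop) (nH : K -> K), (forall b, exists x, E x /\ lt b x) /\
    (forall x y, E x -> E y -> nH x = nH y -> x = y) /\
    forall a, A a -> exists y, lt y a /\ forall d, E d -> lt (V (nH d) a) y.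
Proof.
  intros W WC NM A V HA C [Ccl Cun] AC Vlt Vd.
  pose proof WC as [WC1 [WC2 WC3]].
  destruct (WC3 (fun x y => dec (lexlt lt A V x y))) as [H [Heq [i hom]]].
  pose proof (eq_unb lt W WC NM H Heq) as HU.
  destruct (inhab lt WC) as [k0].
  assert (mono : forall x y a, H x -> H y -> lt x y -> A a -> agree lt A V x y a ->
    if i then le' lt (V x a) (V y a) else le' lt (V y a) (V x a)).
  { intros x y a Hx Hy Hxy Aa Ag. pose proof (dec_spec _ _ (hom x y Hx Hy Hxy)) as [D1 D2].
    destruct i.
    - apply (lex_le lt A V W); auto.
    - assert (x <> y) by (intro E; subst; exact (wo_irrefl W _ Hxy)).
      destruct (lex_total lt A V W Vd x y H0) as [L|L]; [exfalso; exact (D2 eq_refl L)|].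
      apply (lex_le lt A V W); auto. intros a' Aa' Ha'. symmetry. auto. }
  set (stable := fun a b => forall x y, H x -> H y -> le' lt b x -> le' lt b y -> V x a = V y a).
  assert (Stab : forall a, A a -> exists b, stable a b).
  { intros a. induction a as [a IH] using (well_founded_induction (wo_wf W)). intros Aa.
    assert (Ex : forall a', exists b, A a' /\ lt a' a -> stable a' b).
    { intros a'. destruct (classic (A a' /\ lt a' a)) as [[A1 L1]|N].
      - destruct (IH a' L1 A1) as [b Hb]. exists b. auto.
      - exists a'. tauto. }
    set (b' := fun a' => proj1_sig (cid' _ (Ex a'))).
    assert (Hb' : forall a', A a' -> lt a' a -> stable a' (b' a')).
    { intros a' A1 L1. unfold b'. destruct (cid' _ (Ex a')) as [b Hb]. simpl. auto. }
    destruct (IMB lt W WC NM b' a) as [b0 Hb0].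
    set (Hp := fun x => H x /\ le' lt b0 x).
    assert (HpU : forall b, exists x, Hp x /\ lt b x).
    { intros b. destruct (up2 lt W NM b b0) as [z [Z1 Z2]]. destruct (HU z) as [x [Hx Hzx]].
      exists x. split; [split; auto; left|]; eapply (wo_trans W); eauto. }
    assert (Ag : forall x y, Hp x -> Hp y -> agree lt A V x y a).
    { intros x y [Hx Lx] [Hy Ly] a' Aa' Ha'. apply (Hb' a' Aa' Ha'); auto.
      - left. eapply lt_le_trans; eauto.
      - left. eapply lt_le_trans; eauto. }
    assert (Hb1 : exists b1, forall x y, Hp x -> Hp y -> le' lt b1 x -> le' lt b1 y -> V x a = V y a).
    { destruct i eqn:Ei.
      - apply (STAB_up lt W WC NM Hp (fun x => V x a) a HpU).
        + intros x _. auto.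
        + intros x y Hx Hy Hxy. pose proof (mono x y a (proj1 Hx) (proj1 Hy) Hxy Aa (Ag x y Hx Hy)). exact H0.
      - apply (STAB_down lt W Hp (fun x => V x a)).
        + destruct (HpU k0) as [x [Hx _]]. eauto.
        + intros x y Hx Hy Hxy. pose proof (mono x y a (proj1 Hx) (proj1 Hy) Hxy Aa (Ag x y Hx Hy)). exact H0. }
    destruct Hb1 as [b1 Hb1]. destruct (up2 lt W NM b0 b1) as [z [Z1 Z2]].
    exists z. intros x y Hx Hy Lx Ly. apply Hb1.
    - split; auto. left. eapply lt_le_trans; eauto.
    - split; auto. left. eapply lt_le_trans; eauto.
    - left. eapply lt_le_trans; eauto.
    - left. eapply lt_le_trans; eauto. }
  assert (Stab' : forall a, exists b, A a -> stable a b).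
  { intros a. destruct (classic (A a)) as [Aa|N]; [destruct (Stab a Aa) as [b Hb]; eauto | exists a; tauto]. }
  set (beta := fun a => proj1_sig (cid' _ (Stab' a))).
  assert (Hbeta : forall a, A a -> stable a (beta a)).
  { intros a Aa. unfold beta. destruct (cid' _ (Stab' a)) as [b Hb]. simpl. auto. }
  assert (nH' : forall x, {y | H y /\ lt x y}) by (intro x; apply cid'; auto).
  set (nH := fun x => proj1_sig (nH' x)).
  assert (HnH : forall x, H (nH x) /\ lt x (nH x)) by (intro x; exact (proj2_sig (nH' x))).
  assert (psi' : forall x, {c | lt (nH x) c /\ forall a, le' lt a x -> lt (beta a) c}).
  { intros x. apply cid'. destruct (NM x) as [nx Hnx]. destruct (IMB lt W WC NM beta nx) as [c1 Hc1].
    destruct (up2 lt W NM c1 (nH x)) as [c [C1 C2]]. exists c. split; auto.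
    intros a Ha. eapply (wo_trans W); [|exact C1]. apply Hc1. eapply le_trans_lt; eauto. }
  set (psi := fun x => proj1_sig (psi' x)).
  assert (Hpsi : forall x, lt (nH x) (psi x) /\ forall a, le' lt a x -> lt (beta a) (psi x))
    by (intro x; exact (proj2_sig (psi' x))).
  set (D := fun d => forall x, lt x d -> lt (psi x) d).
  set (E := fun d => C d /\ D d).
  assert (cC' : forall x, {y | C y /\ lt x y}).
  { intros x. apply cid'. exact (Cun x). }
  set (cC := fun x => proj1_sig (cC' x)).
  assert (HcC : forall x, C (cC x) /\ lt x (cC x)) by (intro x; exact (proj2_sig (cC' x))).
  assert (bnd' : forall y, {c | lt y c /\ forall x, lt x y -> lt (psi x) c}).
  { intros y. apply cid'. destruct (IMB lt W WC NM psi y) as [c1 Hc1].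
    destruct (up2 lt W NM c1 y) as [c [C1 C2]]. exists c. split; auto.
    intros x Hx. eapply (wo_trans W); eauto. }
  set (step := fun x => proj1_sig (bnd' (cC x))).
  assert (Hstep : forall x, lt (cC x) (step x) /\ forall z, lt z (cC x) -> lt (psi z) (step x))
    by (intro x; exact (proj2_sig (bnd' (cC x)))).
  assert (Hstep2 : forall x, lt x (step x)).
  { intros x. eapply (wo_trans W); [apply HcC| apply Hstep]. }
  exists E, nH. split; [|split].
  -
    intros b. destruct (seq_lim lt W WC NM step Hstep2 b) as [d [Hbd Hd]].
    exists d. split; auto. split.
    + apply Ccl.
      * destruct (Hd b Hbd) as [y [_ Hy]]. exists (cC y). split; [apply HcC|].
        eapply (wo_trans W); [apply Hstep|exact Hy].
      * intros x Hx. destruct (Hd x Hx) as [y [Hxy Hy]]. exists (cC y). split; [apply HcC|]. split.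
        -- eapply (wo_trans W); [exact Hxy|apply HcC].
        -- eapply (wo_trans W); [apply Hstep|exact Hy].
    + intros x Hx. destruct (Hd x Hx) as [y [Hxy Hy]]. eapply (wo_trans W); [|exact Hy].
      apply Hstep. eapply (wo_trans W); [exact Hxy|apply HcC].
  -
    assert (K1 : forall x y, E x -> E y -> lt x y -> lt (nH x) (nH y)).
    { intros x y Ex Ey Hxy. eapply (wo_trans W); [apply Hpsi|].
      eapply (wo_trans W); [apply (proj2 Ey x Hxy)| apply HnH]. }
    intros x y Ex Ey E1. destruct (wo_total W x y) as [L|[L|L]]; auto; exfalso.
    + pose proof (K1 x y Ex Ey L) as L2. rewrite E1 in L2. exact (wo_irrefl W _ L2).
    + pose proof (K1 y x Ey Ex L) as L2. rewrite E1 in L2. exact (wo_irrefl W _ L2).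
  -
    intros a Aa.
    assert (Hg : exists g, lt g a /\ forall d, E d -> lt d a -> le' lt d g).
    { destruct (classic (forall g, lt g a -> exists d, E d /\ lt g d /\ lt d a)) as [Lim|NLim].
      - destruct (classic (exists x, E x /\ lt x a)) as [[x [Ex Hx]]|NEx].
        + exfalso. apply (AC a Aa). apply Ccl.
          * exists x. split; auto. apply Ex.
          * intros g Hg. destruct (Lim g Hg) as [d [Ed Hd]]. exists d. split; auto. apply Ed.
        + destruct (reg_nonempty lt a (HA a Aa)) as [g Hg]. exists g. split; auto.
          intros d Ed Hd. exfalso. eauto.
      - apply not_all_ex_not in NLim. destruct NLim as [g NL].
        apply imply_to_and in NL. destruct NL as [Hg NL]. exists g. split; auto.
        intros d Ed Hd. apply (not_lt_le lt W). intro L. apply NL. eauto. }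
    destruct Hg as [g [Hga Hg]].
    destruct (reg_limit lt a g W (HA a Aa) Hga) as [g' [Hgg' Hg'a]].
    set (W' := fun w => exists d, E d /\ lt d a /\ V (nH d) a = w).
    assert (Hb : exists b, lt b a /\ forall w, W' w -> lt w b).
    { destruct (classic (forall b, lt b a -> exists w, W' w /\ (lt b w \/ b = w))) as [Cof|NCof].
      - exfalso. destruct (HA a Aa) as [Ca [_ Ra]].
        assert (EQ : equipotent W' (seg lt a)).
        { apply Ra; auto. intros w [d [_ [_ <-]]]. apply Vlt. exact Aa. }
        apply (Ca g' Hg'a). apply SB_eq.
        + apply inj_sub. intros x Hx. unfold seg in *. eapply (wo_trans W); eauto.
        + eapply inj_comp; [exact (eq_inj2 _ _ EQ)|].
          apply (inj_pre (seg lt g') W' (fun d => V (nH d) a)).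
          intros w [d [Ed [Hd <-]]]. exists d. split; auto. unfold seg. eapply le_trans_lt; eauto.
      - apply not_all_ex_not in NCof. destruct NCof as [b NC].
        apply imply_to_and in NC. destruct NC as [Hb NC]. exists b. split; auto.
        intros w Ww. destruct (wo_total W w b) as [L|[L|L]]; auto; exfalso; apply NC; eauto. }
    destruct Hb as [b [Hba Hb]].
    set (v := V (nH (beta a)) a).
    assert (Hva : lt v a) by (apply Vlt; exact Aa).
    assert (Hm : exists m, lt m a /\ le' lt b m /\ le' lt v m).
    { destruct (wo_total W b v) as [L|[L|L]].
      - exists v. unfold le'. auto.
      - exists v. unfold le'. auto.
      - exists b. unfold le'. auto. }
    destruct Hm as [m [Hma [Hbm Hvm]]].
    destruct (reg_limit lt a m W (HA a Aa) Hma) as [y [Hmy Hya]].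
    exists y. split; auto. intros d Ed.
    destruct (wo_total W d a) as [L|[L|L]].
    + eapply (wo_trans W); [apply Hb; exists d; auto|]. eapply le_trans_lt; eauto.
    + exfalso. rewrite L in Ed. exact (AC a Aa (proj1 Ed)).
    + assert (Ev : V (nH d) a = v).
      { apply (Hbeta a Aa); try apply HnH.
        - left. eapply (wo_trans W); [apply (proj2 (Hpsi a)); right; reflexivity|].
          eapply (wo_trans W); [apply (proj2 Ed a L)|apply HnH].
        - left. apply HnH. }
      rewrite Ev. eapply le_trans_lt; eauto.
Qed.

Lemma nonstat_nospec {K} (lt : K -> K -> Prop) : wellorder lt -> weakly_compact lt ->
  forall A : K -> Prop, (forall a, A a -> regular_elt lt a) -> unbounded_in_kappa lt A ->
  ~ stationary lt A -> ~ kappa_in_spec lt A.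
Proof.
  intros W WC A HA UA NS [F [HF Hspec]].
  assert (NM : NoMax lt) by (intro x; destruct (UA x) as [y [_ Hy]]; eauto).
  assert (HC : exists C, club lt C /\ forall x, A x -> ~ C x).
  { apply not_all_ex_not in NS. destruct NS as [C NC]. apply imply_to_and in NC.
    destruct NC as [Cc NC]. exists C. split; auto. intros x Ax Cx. apply NC. eauto. }
  destruct HC as [C [Cc AC]].
  assert (Hi : inj K {f | F f}) by (eapply inj_comp; [apply inj_full_l| exact (eq_inj2 _ _ HF)]).
  destruct Hi as [e He].
  set (u := fun x => proj1_sig (e x)).
  assert (u_inj : forall x y, u x = u y -> x = y).
  { intros x y E. apply He. apply sig_ext. exact E. }
  assert (Fu : forall x, F (u x)) by (intro x; exact (proj2_sig (e x))).
  set (V := fun x a => match excluded_middle_informative (A a) with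
                       | left h => proj1_sig (u x (exist A a h)) | right _ => a end).
  assert (V_spec : forall x a (h : A a), V x a = proj1_sig (u x (exist A a h))).
  { intros x a h. unfold V. destruct (excluded_middle_informative (A a)) as [h'|N]; [|contradiction].
    rewrite (proof_irrelevance _ h h'). reflexivity. }
  assert (Vlt : forall x a, A a -> lt (V x a) a).
  { intros x a h. rewrite (V_spec x a h). exact (proj2_sig (u x (exist A a h))). }
  assert (Vd : forall x y, x <> y -> exists a, A a /\ V x a <> V y a).
  { intros x y Hxy. apply NNPP. intro N. apply Hxy. apply u_inj.
    apply functional_extensionality_dep. intros [a h]. apply sig_ext.
    rewrite <- !V_spec. apply NNPP. intro N2. apply N. eauto. }
  destruct (core lt W WC NM A V HA C Cc AC Vlt Vd) as [E [nH [EU [Einj Bnd]]]].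
  assert (gg : forall a' : {a | A a}, {y | lt y (proj1_sig a') /\ forall d, E d -> lt (V (nH d) (proj1_sig a')) y}).
  { intros a'. apply cid'. apply Bnd. exact (proj2_sig a'). }
  set (g := (fun a' => exist (fun b => lt b (proj1_sig a')) (proj1_sig (gg a')) (proj1 (proj2_sig (gg a')))) : prodA lt A).
  set (G := fun f => exists d, E d /\ f = u (nH d)).
  apply (Hspec G).
  - intros f [d [_ ->]]. apply Fu.
  - apply SB_eq.
    + eapply inj_comp; [|apply inj_full_l]. apply (inj_pre_T _ (fun d => u (nH d))).
      intros y [d [_ ->]]. eauto.
    + eapply inj_comp; [apply inj_full_r|]. eapply inj_comp; [apply inj_full_l|].
      eapply inj_comp; [exact (eq_inj2 _ _ (unb_eq lt W WC NM E EU))|].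
      exists (fun d => exist G (u (nH (proj1_sig d))) (ex_intro _ (proj1_sig d) (conj (proj2_sig d) eq_refl))).
      intros [x Ex] [y Ey] E1. apply (f_equal (@proj1_sig _ _)) in E1. simpl in E1.
      apply sig_ext. simpl. apply Einj; auto.
  - exists g. intros f [d [Ed ->]] [a h]. unfold g. simpl.
    pose proof (proj2 (proj2_sig (gg (exist A a h))) d Ed) as Hq. simpl in Hq.
    rewrite (V_spec (nH d) a h) in Hq. exact Hq.
Qed.

Theorem theorem4p2 (K : Type) (lt : K -> K -> Prop) :
  wellorder lt -> weakly_compact lt ->
  forall A : K -> Prop,
    (forall a, A a -> regular_elt lt a) ->
    unbounded_in_kappa lt A ->
    (~ stationary lt A -> ~ kappa_in_spec lt A) /\
    (kappa_in_spec lt A <-> stationary lt A).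
Proof.
  intros W WC A HA UA.
  pose proof (nonstat_nospec lt W WC A HA UA) as P1.
  split; [exact P1|split].
  - intros Sp. apply NNPP. intro N. exact (P1 N Sp).
  - apply (spec_of_stat lt W WC A HA UA).
Qed.
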